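(* Let $D_1\subset\mathbb{R}^2$ be an open disc centered at the origin, let $\boldsymbol{\gamma}_1,\dots,\boldsymbol{\gamma}_m$ be distinct unit vectors in $\mathbb{R}^2$ and $c_1,\dots,c_m$ nonzero reals. If $\boldsymbol{\gamma}(\boldsymbol{\psi})\neq 0$ for at least one $\boldsymbol{\psi}\in\mathbb{S}^1\setminus\mathcal{Z}_1$, then the vector-valued star transform $\mathcal{S}$ is invertible, i.e. every vector field $\mathbf{f}$ on $\mathbb{R}^2$ with components in $C^2_c(D_1)$ is uniquely (and explicitly) determined by $\mathcal{S}\mathbf{f}$.
   Context: For $\mathbf{x}=(x_1,x_2)$ set $\mathbf{x}^\perp=(-x_2,x_1)$. For a unit vector $\boldsymbol{\gamma}$, $\mathcal{X}_{\boldsymbol{\gamma}}h(\mathbf{x})=\int_0^\infty h(\mathbf{x}+t\boldsymbol{\gamma})\,dt$. The vector-valued star transform is $\mathcal{S}\mathbf{f}=\sum_{i=1}^m c_i\,\mathcal{X}_{\boldsymbol{\gamma}_i}\begin{bmatrix}\mathbf{f}\cdot\boldsymbol{\gamma}_i\\ \mathbf{f}\cdot\boldsymbol{\gamma}_i^\perp\end{bmatrix}$. $\mathcal{Z}_1=\bigcup_{i}\{\boldsymbol{\psi}\in\mathbb{S}^1:\boldsymbol{\psi}\cdot\boldsymbol{\gamma}_i=0\}$, and for $\boldsymbol{\psi}\in\mathbb{S}^1\setminus\mathcal{Z}_1$, $\boldsymbol{\gamma}(\boldsymbol{\psi})=-\sum_{i=1}^m\frac{c_i\boldsymbol{\gamma}_i}{\boldsymbol{\psi}\cdot\boldsymbol{\gamma}_i}$.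 *)

(* Defs.v *)
From Stdlib Require Import Reals.
From Coquelicot Require Import Coquelicot.
Open Scope R_scope.

Definition pt := (R * R)%type.

Definition dot (x y : pt) : R := fst x * fst y + snd x * snd y.
Definition perp (x : pt) : pt := (- snd x, fst x).
Definition vnorm (x : pt) : R := sqrt (dot x x).
Definition vadd (x y : pt) : pt := (fst x + fst y, snd x + snd y).
Definition vscal (a : R) (x : pt) : pt := (a * fst x, a * snd x).
Definition is_unit (x : pt) : Prop := dot x x = 1.

Fixpoint vsum (m : nat) (F : nat -> pt) : pt :=
  match m with O => (0, 0) | S k => vadd (vsum k F) (F k) end.

Definition d1 (f : pt -> R) (p : pt) : R := Derive (fun t => f (t, snd p)) (fst p).
Definition d2 (f : pt -> R) (p : pt) : R := Derive (fun t => f (fst p, t)) (snd p).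

Definition C1 (f : pt -> R) : Prop :=
  (forall p, ex_derive (fun t => f (t, snd p)) (fst p)) /\
  (forall p, ex_derive (fun t => f (fst p, t)) (snd p)) /\
  (forall p, continuous f p) /\
  (forall p, continuous (d1 f) p) /\
  (forall p, continuous (d2 f) p).

Definition C2 (f : pt -> R) : Prop := C1 f /\ C1 (d1 f) /\ C1 (d2 f).

(* C^2_c(D) with D the open disc of radius r centred at the origin:
   C^2 with (closed) support a compact subset of D, i.e. contained in a
   closed disc of radius r' < r. *)
Definition C2c_disc (r : R) (f : pt -> R) : Prop :=
  C2 f /\ exists r', r' < r /\ forall x, r' <= vnorm x -> f x = 0.

Definition Xray (g : pt) (h : pt -> R) (x : pt) : R :=
  RInt_gen (fun t => h (vadd x (vscal t g))) (at_point 0) (Rbar_locally p_infty).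

Definition vfield := ((pt -> R) * (pt -> R))%type.

Definition fdot (f : vfield) (v : pt) : pt -> R :=
  fun x => fst f x * fst v + snd f x * snd v.

Definition star (m : nat) (gam : nat -> pt) (c : nat -> R) (f : vfield) (x : pt) : pt :=
  vsum m (fun i => vscal (c i)
    (Xray (gam i) (fdot f (gam i)) x, Xray (gam i) (fdot f (perp (gam i))) x)).

Definition not_in_Z1 (m : nat) (gam : nat -> pt) (psi : pt) : Prop :=
  is_unit psi /\ forall i, (i < m)%nat -> dot psi (gam i) <> 0.

Definition gamma_psi (m : nat) (gam : nat -> pt) (c : nat -> R) (psi : pt) : pt :=
  vscal (-1) (vsum m (fun i => vscal (c i / dot psi (gam i)) (gam i))).

(* Main.v *)
Require Import Defs.
From Stdlib Require Import Reals Lra Lia Psatz FunctionalExtensionality.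
From Coquelicot Require Import Coquelicot.
Open Scope R_scope.

Definition cont2 (f : R -> R -> R) := forall x y, continuity_2d_pt f x y.

Lemma cont2_const c : cont2 (fun _ _ => c).
Proof. intros x y; apply continuity_2d_pt_const. Qed.
Lemma cont2_id1 : cont2 (fun u _ => u).
Proof. intros x y; apply continuity_2d_pt_id1. Qed.
Lemma cont2_id2 : cont2 (fun _ v => v).
Proof. intros x y; apply continuity_2d_pt_id2. Qed.
Lemma cont2_plus f g : cont2 f -> cont2 g -> cont2 (fun u v => f u v + g u v).
Proof. intros Hf Hg x y; apply continuity_2d_pt_plus; auto. Qed.
Lemma cont2_minus f g : cont2 f -> cont2 g -> cont2 (fun u v => f u v - g u v).
Proof. intros Hf Hg x y; apply continuity_2d_pt_minus; auto. Qed.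
Lemma cont2_mult f g : cont2 f -> cont2 g -> cont2 (fun u v => f u v * g u v).
Proof. intros Hf Hg x y; apply continuity_2d_pt_mult; auto. Qed.
Lemma cont2_pow f n : cont2 f -> cont2 (fun u v => f u v ^ n).
Proof.
  intros Hf; induction n; simpl.
  - apply cont2_const.
  - apply cont2_mult; auto.
Qed.

Lemma locally_prod_fp (a b : R) (P : R * R -> Prop) :
  locally (a, b) P -> filter_prod (locally a) (locally b) P.
Proof.
  intros [eps H]. exists (ball a eps) (ball b eps).
  - exists eps; auto.
  - exists eps; auto.
  - intros u v Hu Hv. apply (H (u, v)). split; auto.
Qed.

Lemma cont2_H (H : pt -> R) f g : (forall p, continuous H p) -> cont2 f -> cont2 g ->
  cont2 (fun u v => H (f u v, g u v)).
Proof.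
  intros HH Hf Hg x y. apply continuity_2d_pt_filterlim.
  apply filterlim_comp with (G := locally (f x y, g x y)).
  - intros P HP. apply locally_prod_fp in HP.
    revert P HP. apply (filterlim_pair (F := locally (x, y)) (fun z => f (fst z) (snd z)) (fun z => g (fst z) (snd z))).
    + apply (proj1 (continuity_2d_pt_filterlim f x y)), Hf.
    + apply (proj1 (continuity_2d_pt_filterlim g x y)), Hg.
  - apply HH.
Qed.

Definition cont1 (f : R -> R) := forall x, continuous f x.

Lemma exRc f a b : cont1 f -> ex_RInt f a b.
Proof. intros H; apply (ex_RInt_continuous (V := R_CompleteNormedModule)); intros; apply H. Qed.

Lemma RInt_plusR f g a b : cont1 f -> cont1 g ->
  RInt (fun x => f x + g x) a b = RInt f a b + RInt g a b.
Proof. intros Hf Hg. exact (RInt_plus f g a b (exRc f a b Hf) (exRc g a b Hg)). Qed.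
Lemma RInt_minusR f g a b : cont1 f -> cont1 g ->
  RInt (fun x => f x - g x) a b = RInt f a b - RInt g a b.
Proof. intros Hf Hg. exact (RInt_minus f g a b (exRc f a b Hf) (exRc g a b Hg)). Qed.
Lemma RInt_scalR f k a b : cont1 f ->
  RInt (fun x => k * f x) a b = k * RInt f a b.
Proof. intros Hf. exact (RInt_scal f a b k (exRc f a b Hf)). Qed.
Lemma RInt_ChaslesR f a b c : cont1 f -> RInt f a b + RInt f b c = RInt f a c.
Proof. intros Hf. exact (RInt_Chasles f a b c (exRc f a b Hf) (exRc f b c Hf)). Qed.
Lemma RInt_zero f a b : (forall x, Rmin a b < x < Rmax a b -> f x = 0) -> RInt f a b = 0.
Proof.
  intros H. rewrite (RInt_ext f (fun _ => 0)) by auto. rewrite RInt_const.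
  simpl. unfold scal; simpl; unfold mult; simpl; ring.
Qed.

Lemma cont1_const c : cont1 (fun _ => c).
Proof. intros x; apply continuous_const. Qed.
Lemma cont1_id : cont1 (fun x => x).
Proof. intros x; apply continuous_id. Qed.
Lemma cont1_plus f g : cont1 f -> cont1 g -> cont1 (fun x => f x + g x).
Proof. intros Hf Hg x. apply (continuous_plus f g); auto. Qed.
Lemma cont1_mult f g : cont1 f -> cont1 g -> cont1 (fun x => f x * g x).
Proof. intros Hf Hg x. apply (continuous_mult f g); auto. Qed.
Lemma cont1_opp f : cont1 f -> cont1 (fun x => - f x).
Proof. intros Hf x. apply (continuous_opp f); auto. Qed.
Lemma cont1_minus f g : cont1 f -> cont1 g -> cont1 (fun x => f x - g x).
Proof. intros Hf Hg. apply cont1_plus; auto. apply cont1_opp; auto. Qed.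
Lemma cont1_pow f n : cont1 f -> cont1 (fun x => f x ^ n).
Proof. intros Hf; induction n; simpl. apply cont1_const. apply cont1_mult; auto. Qed.



Lemma cont2_r f x : cont2 f -> cont1 (fun t => f x t).
Proof.
  intros Hf t. pose proof (proj1 (continuity_2d_pt_filterlim f x t) (Hf x t)) as H.
  intros P HP. specialize (H P HP). destruct H as [eps He].
  exists eps. intros s Hs. apply (He (x, s)). split; simpl; auto. apply ball_center.
Qed.
Lemma cont2_l f y : cont2 f -> cont1 (fun t => f t y).
Proof.
  intros Hf t. pose proof (proj1 (continuity_2d_pt_filterlim f t y) (Hf t y)) as H.
  intros P HP. specialize (H P HP). destruct H as [eps He].
  exists eps. intros s Hs. apply (He (s, y)). split; simpl; auto. apply ball_center.
Qed.

Lemma PC_aux f a b : cont2 f -> a <= b -> cont1 (fun x => RInt (fun t => f x t) a b).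
Proof.
  intros Hf Hab x0. apply filterlim_locally. intros eps.
  assert (Hu := uniform_continuity_2d f (x0 - 1) (x0 + 1) a b (fun x y _ _ => Hf x y)).
  assert (He : 0 < eps / (b - a + 1)). { apply Rdiv_lt_0_compat. apply cond_pos. lra. }
  destruct (Hu (mkposreal _ He)) as [d Hd].
  assert (Hm : 0 < Rmin d 1). { apply Rmin_pos. apply cond_pos. lra. }
  exists (mkposreal _ Hm). intros x Hx. simpl in Hx.
  change (Rabs (RInt (fun t => f x t) a b - RInt (fun t => f x0 t) a b) < eps).
  unfold ball in Hx; simpl in Hx; unfold AbsRing_ball in Hx; simpl in Hx.
  unfold abs, minus, plus, opp in Hx; simpl in Hx.
  assert (Hx1 : Rabs (x - x0) < d). { eapply Rlt_le_trans; [apply Hx|apply Rmin_l]. }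
  assert (Hx2 : Rabs (x - x0) < 1). { eapply Rlt_le_trans; [apply Hx|apply Rmin_r]. }
  rewrite <- RInt_minusR by (apply cont2_r; auto).
  eapply Rle_lt_trans.
  { apply abs_RInt_le_const with (M := eps / (b - a + 1)); auto.
    - apply exRc. apply cont1_minus; apply cont2_r; auto.
    - intros t Ht. left. apply Hd; try lra.
      + apply Rabs_lt_between' in Hx2; lra.
      + rewrite Rminus_diag, Rabs_R0. apply cond_pos. }
  apply Rmult_lt_reg_r with (b - a + 1). lra.
  simpl. field_simplify; try lra. pose proof (cond_pos eps). lra.
Qed.

Lemma PC f a b : cont2 f -> cont1 (fun x => RInt (fun t => f x t) a b).
Proof.
  intros Hf. destruct (Rle_lt_dec a b) as [H|H].
  - apply PC_aux; auto.
  - intros x. apply continuous_ext with (f := fun x => - RInt (fun t => f x t) b a).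
    intros y. rewrite <- (opp_RInt_swap (fun t => f y t) b a). reflexivity.
    apply exRc, cont2_r; auto.
    apply cont1_opp, PC_aux; auto; lra.
Qed.

Lemma cont2_swap f : cont2 f -> cont2 (fun u v => f v u).
Proof.
  intros Hf x y eps. destruct (Hf y x eps) as [d Hd].
  exists d. intros u v Hu Hv. apply Hd; auto.
Qed.

Lemma exRc2 f a b c d : cont2 f -> ex_RInt (fun t => RInt (fun y => f t y) c d) a b.
Proof. intros Hf. apply exRc. apply PC; auto. Qed.

Lemma FB f a b c d : cont2 f ->
  RInt (fun x => RInt (fun y => f x y) c d) a b =
  RInt (fun y => RInt (fun x => f x y) a b) c d.
Proof.
  intros Hf.
  set (K := fun x => RInt (fun y => f x y) c d).
  assert (HK : cont1 K) by (apply PC; auto).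
  set (F := fun u => RInt K a u).
  set (G := fun u => RInt (fun y => RInt (fun x => f x y) a u) c d).
  assert (DF : forall u, is_derive F u (K u)).
  { intros u. apply (is_derive_RInt K F a u).
    - apply filter_forall. intros b0. apply (RInt_correct (V := R_CompleteNormedModule)). apply exRc; auto.
    - apply HK. }
  assert (DG : forall u, is_derive G u (K u)).
  { intros u. unfold G.
    assert (Hder : forall z v, is_derive (fun z => RInt (fun x => f x v) a z) z (f z v)).
    { intros z v. apply (is_derive_RInt (fun x => f x v) (fun z => RInt (fun x => f x v) a z) a z).
      - apply filter_forall. intros b0. apply (RInt_correct (V := R_CompleteNormedModule)). apply exRc, cont2_l; auto.
      - apply cont2_l; auto. }
    pose proof (is_derive_RInt_param (fun u y => RInt (fun x => f x y) a u) c d u) as P.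
    assert (E : RInt (fun t => Derive (fun z => RInt (fun x => f x t) a z) u) c d = K u).
    { unfold K. apply RInt_ext. intros x _. apply is_derive_unique. apply Hder. }
    simpl in P. rewrite E in P. apply P.
    - apply filter_forall. intros x0 t _. eexists. apply Hder.
    - intros t _. apply continuity_2d_pt_ext with (f := f).
      + intros x0 y0. symmetry. apply is_derive_unique. apply Hder.
      + apply Hf.
    - apply filter_forall. intros y. apply exRc. apply (PC (fun t x => f x t)).
      apply cont2_swap; auto. }
  assert (DH : forall u, is_derive (fun u => F u - G u) u 0).
  { intros u. replace 0 with (K u - K u) by ring.
    apply (is_derive_minus F G u (K u) (K u)); auto. }
  assert (Hint := RInt_Derive (fun u => F u - G u) a b).
  specialize (Hint (fun x _ => ex_intro _ 0 (DH x))).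
  assert (Hc : forall x, Rmin a b <= x <= Rmax a b -> continuous (Derive (fun u => F u - G u)) x).
  { intros x _. apply continuous_ext with (f := fun _ => 0).
    + intros y. symmetry. apply is_derive_unique. apply DH.
    + apply continuous_const. }
  specialize (Hint Hc).
  rewrite RInt_zero in Hint.
  2:{ intros x _. apply is_derive_unique. apply DH. }
  assert (Ha : F a - G a = 0).
  { unfold F, G. rewrite RInt_point. rewrite RInt_zero. simpl. unfold zero; simpl. ring.
    intros x _. rewrite RInt_point. reflexivity. }
  rewrite Ha in Hint. unfold F, G, K in Hint. unfold F. rewrite Rminus_0_r in Hint. symmetry in Hint. apply Rminus_diag_uniq in Hint. exact Hint.
Qed.

Lemma RInt_ge0 f a b : a <= b -> cont1 f -> (forall x, a < x < b -> 0 <= f x) -> 0 <= RInt f a b.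
Proof.
  intros Hab Hf H. rewrite <- (RInt_zero (fun _ => 0) a b) by auto.
  apply RInt_le; auto. apply exRc, cont1_const. apply exRc; auto.
Qed.

Lemma RInt_ge_const f a b k : a <= b -> cont1 f -> (forall x, a < x < b -> k <= f x) -> (b - a) * k <= RInt f a b.
Proof.
  intros Hab Hf H. assert (E := RInt_const a b k). simpl in E. unfold scal in E; simpl in E; unfold mult in E; simpl in E.
  rewrite <- E. apply RInt_le; auto. apply exRc, cont1_const. apply exRc; auto.
Qed.

Lemma cont_bound g a b : a <= b -> cont1 g -> exists M, 0 <= M /\ forall t, a <= t <= b -> Rabs (g t) <= M.
Proof.
  intros Hab Hg. destruct (continuity_ab_maj (fun t => Rabs (g t)) a b Hab) as [Mx [H1 H2]].
  - intros c _. apply (continuity_pt_comp g Rabs). apply continuity_pt_filterlim, Hg.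
    apply Rcontinuity_abs.
  - exists (Rabs (g Mx)). split. apply Rabs_pos. auto.
Qed.

Section L1.
Variables (g : R -> R) (R0 t0 C : R).
Hypothesis Hg : cont1 g.
Let q t := 1 - (t - t0) ^ 2 / C.
Let phi j n t := t ^ j * q t ^ n * g t.

Lemma cont_phi j n : cont1 (phi j n).
Proof.
  unfold phi, q. apply cont1_mult; auto. apply cont1_mult. apply cont1_pow, cont1_id.
  apply cont1_pow. apply cont1_minus. apply cont1_const.
  intros x. apply (continuous_mult (fun t => (t - t0)^2) (fun _ => / C)).
  apply cont1_pow, cont1_minus. apply cont1_id. apply cont1_const. apply continuous_const.
Qed.

Lemma closure_phi : C <> 0 -> (forall j, RInt (fun t => t ^ j * g t) (- R0) R0 = 0) ->
  forall n j, RInt (phi j n) (- R0) R0 = 0.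
Proof.
  intros HC Hm n. induction n; intros j.
  - rewrite <- (Hm j). apply RInt_ext. intros x _. unfold phi. simpl. ring.
  - rewrite (RInt_ext (phi j (S n)) (fun t => phi j n t - / C * (phi (S (S j)) n t - (2 * t0) * phi (S j) n t + t0 ^ 2 * phi j n t))).
    2:{ intros x _. unfold phi, q. simpl. field. auto. }
    Ltac cc := repeat first [apply cont_phi | apply cont1_minus | apply cont1_plus | apply cont1_mult | apply cont1_const].
    rewrite RInt_minusR by cc. rewrite RInt_scalR by cc. rewrite RInt_plusR by cc.
    rewrite RInt_minusR by cc. rewrite RInt_scalR by cc. rewrite RInt_scalR by cc. rewrite !IHn. change (0 - / C * (0 - 2 * t0 * 0 + t0 ^ 2 * 0) = (0:R)).
    ring.
Qed.
End L1.

Ltac fixeq := match goal with |- ?a = ?b => change (@eq R a b) end.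

Lemma L1pos g R0 t0 : 0 < R0 -> cont1 g -> (forall t, R0 <= Rabs t -> g t = 0) ->
  (forall j, RInt (fun t => t ^ j * g t) (- R0) R0 = 0) -> 0 < g t0 -> False.
Proof.
  intros HR Hg Hs Hm Hpos.
  assert (Ht0 : Rabs t0 < R0).
  { destruct (Rlt_le_dec (Rabs t0) R0) as [H|H]; auto. rewrite Hs in Hpos; lra. }
  set (k := g t0 / 2).
  assert (Hk : 0 < k) by (unfold k; lra).
  destruct (proj1 (filterlim_locally g (g t0)) (Hg t0) (mkposreal _ Hk)) as [eta Heta].
  assert (Hnear : forall t, Rabs (t - t0) < eta -> k < g t).
  { intros t Ht. assert (B := Heta t Ht). unfold ball in B; simpl in B; unfold AbsRing_ball, abs, minus, plus, opp in B; simpl in B.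
    apply Rabs_lt_between' in B. unfold k in *. lra. }
  set (e := Rmin (eta / 2) (R0 - Rabs t0)).
  assert (He : 0 < e). { unfold e. apply Rmin_pos. pose proof (cond_pos eta); lra. lra. }
  assert (He1 : e < eta). { unfold e. eapply Rle_lt_trans. apply Rmin_l. pose proof (cond_pos eta); lra. }
  assert (He2 : e <= R0 - Rabs t0) by (unfold e; apply Rmin_r).
  assert (Hab : - R0 <= t0 - e /\ t0 + e <= R0).
  { split; apply Rabs_lt_between' in Ht0 || idtac; unfold Rabs in He2; destruct (Rcase_abs t0); lra. }
  set (C := 4 * R0 ^ 2 + 1).
  assert (HC : 0 < C) by (unfold C; nra).
  set (q := fun t => 1 - (t - t0) ^ 2 / C).
  set (a := 1 - (e / 2) ^ 2 / C).
  set (b := 1 - e ^ 2 / C).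
  assert (Hq0 : forall t, - R0 <= t <= R0 -> 0 <= q t).
  { intros t Ht. unfold q. assert ((t - t0) ^ 2 <= 4 * R0 ^ 2).
    { apply Rabs_lt_between' in Ht0 || idtac. unfold Rabs in Ht0; destruct (Rcase_abs t0); nra. }
    apply Rmult_le_reg_r with C; auto. unfold Rdiv. field_simplify; try lra. unfold C; lra. }
  assert (Hba : 0 < b < a).
  { unfold a, b. split.
    - apply Rmult_lt_reg_r with C; auto. field_simplify; try lra.
      assert (e <= R0). { apply Rabs_lt_between' in Ht0 || idtac. pose proof (Rabs_pos t0). lra. }
      unfold C; nra.
    - apply Rmult_lt_reg_r with C; auto. field_simplify; try lra. nra. }
  assert (Ha1 : a <= 1). { unfold a. assert (0 <= (e/2)^2 / C). apply Rdiv_le_0_compat; nra. lra. }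
  destruct (cont_bound g (- R0) R0) as [M [HM0 HM]]; auto; try lra.
  set (P := fun n t => q t ^ n * g t).
  assert (HPc : forall n, cont1 (P n)).
  { intros n. unfold P, q. apply cont1_mult; auto. apply cont1_pow. apply cont1_minus. apply cont1_const.
    intros x. apply (continuous_mult (fun t => (t - t0)^2) (fun _ => / C)).
    apply cont1_pow, cont1_minus. apply cont1_id. apply cont1_const. apply continuous_const. }
  assert (HP0 : forall n, RInt (P n) (- R0) R0 = 0).
  { intros n. rewrite <- (closure_phi g R0 t0 C Hg ltac:(lra) Hm n 0). apply RInt_ext. intros x _. unfold P, q. simpl. ring. }
  assert (Key : forall n, e * (k * a ^ n) <= 2 * R0 * (M * b ^ n)).
  { intros n.
    assert (Hfar : forall t, - R0 <= t <= R0 -> e <= Rabs (t - t0) -> Rabs (P n t) <= M * b ^ n).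
    { intros t Ht Hd. unfold P. rewrite Rabs_mult, Rmult_comm. apply Rmult_le_compat; try apply Rabs_pos; auto.
      rewrite <- RPow_abs. apply pow_incr. split. apply Rabs_pos.
      rewrite Rabs_pos_eq by auto. unfold q, b.
      assert (e ^ 2 <= (t - t0) ^ 2). { rewrite <- (pow2_abs (t - t0)). apply pow_incr. lra. }
      apply Rmult_le_reg_r with C; auto. field_simplify; try lra. }
    assert (Hnn : forall t, t0 - e <= t <= t0 + e -> 0 <= P n t).
    { intros t Ht. unfold P. apply Rmult_le_pos. apply pow_le, Hq0. lra.
      left. apply Rlt_trans with k; auto. apply Hnear. apply Rabs_lt_between'. lra. }
    assert (Hmid : forall t, t0 - e/2 <= t <= t0 + e/2 -> k * a ^ n <= P n t).
    { intros t Ht. unfold P. rewrite (Rmult_comm k). apply Rmult_le_compat; try lra.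
      apply pow_le; lra. 2:{ left. apply Hnear. apply Rabs_lt_between'. lra. }
      apply pow_incr. split. lra. unfold q, a.
      assert ((t - t0) ^ 2 <= (e/2) ^ 2) by nra.
      apply Rmult_le_reg_r with C; auto. field_simplify; try lra. }
    assert (E := HP0 n).
    rewrite <- (RInt_ChaslesR (P n) (- R0) (t0 - e) R0) in E by auto.
    rewrite <- (RInt_ChaslesR (P n) (t0 - e) (t0 - e/2) R0) in E by auto.
    rewrite <- (RInt_ChaslesR (P n) (t0 - e/2) (t0 + e/2) R0) in E by auto.
    rewrite <- (RInt_ChaslesR (P n) (t0 + e/2) (t0 + e) R0) in E by auto.
    assert (B1 : Rabs (RInt (P n) (- R0) (t0 - e)) <= (t0 - e - - R0) * (M * b ^ n)).
    { apply abs_RInt_le_const. lra. apply exRc; auto. intros t Ht. apply Hfar. lra.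
      rewrite Rabs_left1 by lra. lra. }
    assert (B5 : Rabs (RInt (P n) (t0 + e) R0) <= (R0 - (t0 + e)) * (M * b ^ n)).
    { apply abs_RInt_le_const. lra. apply exRc; auto. intros t Ht. apply Hfar. lra.
      rewrite Rabs_right by lra. lra. }
    assert (B2 : 0 <= RInt (P n) (t0 - e) (t0 - e/2)).
    { apply RInt_ge0; auto. lra. intros t Ht. apply Hnn. lra. }
    assert (B4 : 0 <= RInt (P n) (t0 + e/2) (t0 + e)).
    { apply RInt_ge0; auto. lra. intros t Ht. apply Hnn. lra. }
    assert (B3 : (t0 + e/2 - (t0 - e/2)) * (k * a ^ n) <= RInt (P n) (t0 - e/2) (t0 + e/2)).
    { apply RInt_ge_const; auto. lra. intros t Ht. apply Hmid. lra. }
    apply Rabs_le_between' in B1 || idtac.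
    assert (0 <= M * b ^ n). { apply Rmult_le_pos; auto. apply pow_le; lra. }
    revert E B1 B5 B2 B4 B3.
    generalize (RInt (P n) (- R0) (t0 - e)) (RInt (P n) (t0 - e) (t0 - e / 2))
      (RInt (P n) (t0 - e / 2) (t0 + e / 2)) (RInt (P n) (t0 + e / 2) (t0 + e)) (RInt (P n) (t0 + e) R0).
    intros r1 r2 r3 r4 r5 E B1 B5 B2 B4 B3.
    simpl in E. unfold plus in E; simpl in E.
    assert (A1 := Rabs_le_between' r1 0 ((t0 - e - - R0) * (M * b ^ n))).
    assert (A5 := Rabs_le_between' r5 0 ((R0 - (t0 + e)) * (M * b ^ n))).
    rewrite Rminus_0_r in A1, A5. destruct A1 as [A1 _]. destruct A5 as [A5 _].
    specialize (A1 B1). specialize (A5 B5).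
    assert (0 <= e * (M * b ^ n)) by (apply Rmult_le_pos; lra).
    nra. }
  assert (Hx : Rabs (b / a) < 1).
  { rewrite Rabs_pos_eq. apply Rmult_lt_reg_r with a. lra. unfold Rdiv. rewrite Rmult_assoc, Rinv_l; lra.
    apply Rdiv_le_0_compat; lra. }
  assert (Hy : 0 < e * k / (2 * R0 * M + 1)).
  { apply Rdiv_lt_0_compat. nra. nra. }
  destruct (pow_lt_1_zero _ Hx _ Hy) as [N HN].
  specialize (HN N (le_n N)). specialize (Key N).
  rewrite Rabs_pos_eq in HN by (apply pow_le; apply Rdiv_le_0_compat; lra).
  assert (Eb : b ^ N = (b / a) ^ N * a ^ N).
  { rewrite <- Rpow_mult_distr. f_equal. field. lra. }
  assert (0 < a ^ N) by (apply pow_lt; lra).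
  assert (0 <= (b / a) ^ N) by (apply pow_le; apply Rdiv_le_0_compat; lra).
  rewrite Eb in Key.
  assert (HN2 : (b / a) ^ N * (2 * R0 * M + 1) < e * k).
  { apply Rmult_lt_reg_r with (/ (2 * R0 * M + 1)). apply Rinv_0_lt_compat; nra.
    rewrite Rmult_assoc, Rinv_r by nra. lra. }
  set (z := (b / a) ^ N) in *. set (w := a ^ N) in *.
  assert (z * (2 * R0 * M + 1) * w < e * k * w) by nra.
  nra.
Qed.

Lemma L1 g R0 : 0 < R0 -> cont1 g -> (forall t, R0 <= Rabs t -> g t = 0) ->
  (forall j, RInt (fun t => t ^ j * g t) (- R0) R0 = 0) -> forall t, g t = 0.
Proof.
  intros HR Hg Hs Hm t0.
  destruct (Rtotal_order (g t0) 0) as [H|[H|H]]; auto.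
  - exfalso. apply (L1pos (fun t => - g t) R0 t0); auto.
    + apply cont1_opp; auto.
    + intros t Ht. rewrite Hs; auto; ring.
    + intros j. rewrite (RInt_ext (fun t => t ^ j * - g t) (fun t => -1 * (t ^ j * g t))) by (intros; fixeq; ring).
      rewrite RInt_scalR, Hm. fixeq; ring. apply cont1_mult; auto. apply cont1_pow, cont1_id.
    + lra.
  - exfalso. apply (L1pos g R0 t0); auto.
Qed.

Lemma sum_bound (c : nat -> R) n e : 0 <= e <= 1 ->
  Rabs (sum_f_R0 (fun j => c j * e ^ j) n) <= sum_f_R0 (fun j => Rabs (c j)) n.
Proof.
  intros He. assert (Hp : forall j, Rabs (e ^ j) <= 1).
  { intros j. rewrite Rabs_pos_eq by (apply pow_le; lra). rewrite <- (pow1 j). apply pow_incr; lra. }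
  induction n; simpl.
  - rewrite Rabs_mult. specialize (Hp 0%nat). simpl in Hp. rewrite Rabs_R1. lra.
  - eapply Rle_trans. apply Rabs_triang. apply Rplus_le_compat; auto.
    rewrite Rabs_mult. specialize (Hp (S n)). pose proof (Rabs_pos (c (S n))).
    pose proof (Rabs_pos (e * e ^ n)). simpl in Hp. nra.
Qed.

Lemma poly0 n : forall (a : nat -> R) d, 0 < d ->
  (forall e, 0 < e < d -> sum_f_R0 (fun j => a j * e ^ j) n = 0) ->
  forall j, (j <= n)%nat -> a j = 0.
Proof.
  induction n; intros a d Hd H j Hj.
  - assert (j = 0%nat) by lia. subst. specialize (H (d/2) ltac:(lra)). simpl in H. lra.
  - set (B := sum_f_R0 (fun j => Rabs (a (S j))) n).
    assert (HB : 0 <= B).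
    { unfold B. clear. induction n; simpl. apply Rabs_pos. pose proof (Rabs_pos (a (S (S n)))). lra. }
    assert (Hdec : forall e, sum_f_R0 (fun j => a j * e ^ j) (S n) = a 0%nat + e * sum_f_R0 (fun j => a (S j) * e ^ j) n).
    { intros e. rewrite decomp_sum by lia. simpl. f_equal. ring.
      clear. induction n; simpl. ring. rewrite IHn. ring. }
    assert (Ha0 : a 0%nat = 0).
    { destruct (Req_dec (a 0%nat) 0) as [E|E]; auto. exfalso.
      set (e := Rmin (Rmin d 1) (Rabs (a 0%nat) / (B + 1)) / 2).
      assert (Hpos : 0 < Rabs (a 0%nat)) by (apply Rabs_pos_lt; auto).
      assert (He0 : 0 < e). { unfold e. apply Rdiv_lt_0_compat; try lra. apply Rmin_pos. apply Rmin_pos; lra.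
        apply Rdiv_lt_0_compat; lra. }
      assert (Hm1 : Rmin (Rmin d 1) (Rabs (a 0%nat) / (B + 1)) <= Rmin d 1) by apply Rmin_l.
      assert (Hm2 : Rmin (Rmin d 1) (Rabs (a 0%nat) / (B + 1)) <= Rabs (a 0%nat) / (B + 1)) by apply Rmin_r.
      assert (Hd1 := Rmin_l d 1). assert (Hd2 := Rmin_r d 1).
      assert (He1 : e < d) by (unfold e in *; lra).
      assert (He2 : e <= 1) by (unfold e in *; lra).
      assert (He3 : e * (B + 1) < Rabs (a 0%nat)).
      { assert (e < Rabs (a 0%nat) / (B + 1)) by (unfold e in *; lra).
        apply Rmult_lt_reg_r with (/ (B + 1)). apply Rinv_0_lt_compat; lra.
        rewrite Rmult_assoc, Rinv_r by lra. lra. }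
      specialize (H e ltac:(lra)). rewrite Hdec in H.
      assert (Hs := sum_bound (fun j => a (S j)) n e ltac:(lra)). cbv beta in Hs. fold B in Hs.
      assert (a 0%nat = - (e * sum_f_R0 (fun j => a (S j) * e ^ j) n)) by lra.
      rewrite H0 in Hpos, He3. rewrite Rabs_Ropp, Rabs_mult, Rabs_pos_eq in He3 by lra.
      assert (e * Rabs (sum_f_R0 (fun j => a (S j) * e ^ j) n) <= e * B) by (apply Rmult_le_compat_l; lra).
      lra. }
    destruct j as [|j]; auto.
    apply (IHn (fun j => a (S j)) d Hd); try lia.
    intros e He. specialize (H e He). rewrite Hdec, Ha0 in H.
    assert (e <> 0) by lra.
    apply Rmult_integral in H0 || idtac.
    destruct (Rmult_integral e (sum_f_R0 (fun j => a (S j) * e ^ j) n)); auto. lra. lra.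
Qed.

Lemma RInt_supp f R0 a b : cont1 f -> (forall y, R0 <= Rabs y -> f y = 0) -> a <= - R0 -> R0 <= b ->
  RInt f a b = RInt f (- R0) R0.
Proof.
  intros Hf Hs Ha Hb.
  rewrite <- (RInt_ChaslesR f a (- R0) b) by auto.
  rewrite <- (RInt_ChaslesR f (- R0) R0 b) by auto.
  rewrite (RInt_zero f a (- R0)).
  rewrite (RInt_zero f R0 b).
  fixeq; ring.
  all: intros x Hx; apply Hs; unfold Rmin, Rmax in Hx; repeat destruct Rle_dec in Hx;
    unfold Rabs; destruct Rcase_abs; lra.
Qed.

Lemma cont1_sum (F : nat -> R -> R) n : (forall i, cont1 (F i)) -> cont1 (fun y => sum_f_R0 (fun i => F i y) n).
Proof.
  intros H. induction n; simpl. apply H. apply cont1_plus; auto.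
Qed.

Lemma RInt_sum (F : nat -> R -> R) n a b : (forall i, cont1 (F i)) ->
  RInt (fun y => sum_f_R0 (fun i => F i y) n) a b = sum_f_R0 (fun i => RInt (F i) a b) n.
Proof.
  intros H. induction n; simpl. reflexivity.
  rewrite RInt_plusR. rewrite IHn. reflexivity. apply cont1_sum; auto. apply H.
Qed.

Lemma C_pos n i : 0 < Binomial.C n i.
Proof. unfold Binomial.C. apply Rdiv_lt_0_compat. apply INR_fact_lt_0. apply Rmult_lt_0_compat; apply INR_fact_lt_0. Qed.

Lemma cont2_comp G f1 f2 : cont2 G -> cont2 f1 -> cont2 f2 -> cont2 (fun u v => G (f1 u v) (f2 u v)).
Proof.
  intros HG H1 H2. apply (cont2_H (fun p => G (fst p) (snd p))); auto.
  intros [x y]. apply (proj1 (continuity_2d_pt_filterlim G x y) (HG x y)).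
Qed.

Lemma cont2_of1 f : cont1 f -> cont2 (fun u _ => f u).
Proof.
  intros Hf x y eps. destruct (proj1 (filterlim_locally f (f x)) (Hf x) eps) as [d Hd].
  exists d. intros u v Hu _. apply (Hd u Hu).
Qed.

Lemma cont1_comp2 G f1 f2 : cont2 G -> cont1 f1 -> cont1 f2 -> cont1 (fun x => G (f1 x) (f2 x)).
Proof.
  intros HG H1 H2.
  apply (cont2_l (fun u v => G (f1 u) (f2 u)) 0).
  apply cont2_comp; auto; apply cont2_of1; auto.
Qed.

Section Rad.
Variables (G : R -> R -> R) (R0 d : R).
Hypotheses (HR : 0 < R0) (Hd : 0 < d) (HG : cont2 G)
  (Hsx : forall x y, R0 <= Rabs x -> G x y = 0)
  (Hsy : forall x y, R0 <= Rabs y -> G x y = 0)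
  (Hrad : forall e, 0 < e < d -> forall s, RInt (fun x => G x (s + e * x)) (- R0) R0 = 0).

Let Mom l x := RInt (fun y => y ^ l * G x y) (- R0) R0.
Let N j l := RInt (fun x => x ^ j * Mom l x) (- R0) R0.

Lemma cont2_yl l : cont2 (fun x y => y ^ l * G x y).
Proof. apply cont2_mult; auto. apply cont2_pow, cont2_id2. Qed.

Lemma cont_Mom l : cont1 (Mom l).
Proof. unfold Mom. apply (PC (fun x y => y ^ l * G x y)). apply cont2_yl. Qed.

Lemma inner_eq n e x : 0 < e < 1 -> - R0 < x < R0 ->
  RInt (fun s => s ^ n * G x (s + e * x)) (- (2 * R0)) (2 * R0) =
  sum_f_R0 (fun i => (Binomial.C n i * (-1) ^ i * e ^ i) * (x ^ i * Mom (n - i) x)) n.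
Proof.
  intros He Hx.
  set (f := fun y => (y - e * x) ^ n * G x y).
  assert (Hf : cont1 f).
  { unfold f. apply cont1_mult. apply cont1_pow, cont1_minus. apply cont1_id. apply cont1_const.
    apply (cont2_r G x HG). }
  assert (E1 := RInt_comp_lin f 1 (e * x) (- (2 * R0)) (2 * R0) (exRc _ _ _ Hf)).
  rewrite (RInt_ext _ (fun s => s ^ n * G x (s + e * x))) in E1.
  2:{ intros y _. unfold f, scal; simpl; unfold mult; simpl. fixeq.
      replace (1 * y + e * x - e * x) with y by ring. replace (1 * y + e * x) with (y + e * x) by ring. ring. }
  rewrite E1. clear E1.
  rewrite (RInt_supp f R0).
  2: exact Hf.
  2:{ intros y Hy. unfold f. rewrite Hsy; auto. ring. }
  2:{ assert (Rabs (e * x) < R0). { rewrite Rabs_mult. rewrite Rabs_pos_eq by lra.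
        assert (Rabs x < R0) by (apply Rabs_def1; lra). nra. }
      apply Rabs_def2 in H. lra. }
  2:{ assert (Rabs (e * x) < R0). { rewrite Rabs_mult. rewrite Rabs_pos_eq by lra.
        assert (Rabs x < R0) by (apply Rabs_def1; lra). nra. }
      apply Rabs_def2 in H. lra. }
  rewrite (RInt_ext f (fun y => sum_f_R0 (fun i => (Binomial.C n i * (-1) ^ i * e ^ i * x ^ i) * (y ^ (n - i) * G x y)) n)).
  2:{ intros y _. unfold f. fixeq. replace (y - e * x) with (- e * x + y) by ring. rewrite binomial.
      rewrite Rmult_comm, scal_sum. apply sum_eq. intros i _.
      replace (- e * x) with ((-1) * e * x) by ring. rewrite !Rpow_mult_distr. ring. }
  rewrite RInt_sum.
  2:{ intros i. apply cont1_mult. apply cont1_const. apply (cont2_r (fun x y => y ^ (n - i) * G x y)). apply cont2_yl. }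
  apply sum_eq. intros i _. rewrite RInt_scalR. unfold Mom. fixeq; ring.
  apply (cont2_r (fun x y => y ^ (n - i) * G x y)). apply cont2_yl.
Qed.

Lemma step1 n e : 0 < e < Rmin d 1 ->
  sum_f_R0 (fun i => (Binomial.C n i * (-1) ^ i * N i (n - i)) * e ^ i) n = 0.
Proof.
  intros He. assert (He1 := Rmin_l d 1). assert (He2 := Rmin_r d 1).
  assert (Z : RInt (fun s => RInt (fun x => s ^ n * G x (s + e * x)) (- R0) R0) (- (2 * R0)) (2 * R0) = 0).
  { apply RInt_zero. intros s _. rewrite RInt_scalR. rewrite Hrad by lra. fixeq; ring.
    apply cont1_comp2; auto. apply cont1_id. apply cont1_plus. apply cont1_const.
    apply cont1_mult. apply cont1_const. apply cont1_id. }
  rewrite (FB (fun s x => s ^ n * G x (s + e * x))) in Z.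
  2:{ apply cont2_mult. apply cont2_pow, cont2_id1. apply cont2_comp; auto. apply cont2_id2.
      apply cont2_plus. apply cont2_id1. apply cont2_mult. apply cont2_const. apply cont2_id2. }
  rewrite (RInt_ext _ (fun x => sum_f_R0 (fun i => (Binomial.C n i * (-1) ^ i * e ^ i) * (x ^ i * Mom (n - i) x)) n)) in Z.
  2:{ intros x Hx. rewrite Rmin_left in Hx by lra. rewrite Rmax_right in Hx by lra.
      apply inner_eq; lra. }
  rewrite RInt_sum in Z.
  2:{ intros i. apply cont1_mult. apply cont1_const. apply cont1_mult. apply cont1_pow, cont1_id. apply cont_Mom. }
  rewrite <- Z. apply sum_eq. intros i _. rewrite RInt_scalR. unfold N. fixeq; ring.
  apply cont1_mult. apply cont1_pow, cont1_id. apply cont_Mom.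
Qed.

Lemma N_zero j l : N j l = 0.
Proof.
  assert (Hd1 : 0 < Rmin d 1) by (apply Rmin_pos; lra).
  assert (H := poly0 (j + l) (fun i => Binomial.C (j + l) i * (-1) ^ i * N i (j + l - i)) (Rmin d 1) Hd1
     (fun e He => step1 (j + l) e He) j ltac:(lia)).
  cbv beta in H. replace (j + l - j)%nat with l in H by lia.
  apply Rmult_integral in H. destruct H as [H|H]; auto.
  apply Rmult_integral in H. destruct H as [H|H].
  - pose proof (C_pos (j + l) j). lra.
  - exfalso. apply (pow_nonzero (-1) j); auto. lra.
Qed.

Lemma Rad_main : forall x y, G x y = 0.
Proof.
  assert (HM : forall l x, Mom l x = 0).
  { intros l. apply (L1 (Mom l) R0).
    - exact HR.
    - apply cont_Mom.
    - intros t Ht. unfold Mom. apply RInt_zero. intros y _. rewrite Hsx; auto. ring.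
    - intros j. apply N_zero. }
  intros x. apply (L1 (fun y => G x y) R0).
  - exact HR.
  - apply cont2_r; auto.
  - intros t Ht. apply Hsy; auto.
  - intros l. apply HM.
Qed.
End Rad.

Fixpoint rsum (m : nat) (F : nat -> R) : R :=
  match m with O => 0 | S k => rsum k F + F k end.

Lemma vsum_fst m F : fst (vsum m F) = rsum m (fun i => fst (F i)).
Proof. induction m; simpl; auto. rewrite IHm. auto. Qed.
Lemma vsum_snd m F : snd (vsum m F) = rsum m (fun i => snd (F i)).
Proof. induction m; simpl; auto. rewrite IHm. auto. Qed.

Lemma rsum_ext m F G : (forall i, (i < m)%nat -> F i = G i) -> rsum m F = rsum m G.
Proof. induction m; simpl; intros H; auto. rewrite IHm, H; auto. Qed.
Lemma rsum_plus m F G : rsum m (fun i => F i + G i) = rsum m F + rsum m G.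
Proof. induction m; simpl. ring. rewrite IHm. ring. Qed.
Lemma rsum_minus m F G : rsum m (fun i => F i - G i) = rsum m F - rsum m G.
Proof. induction m; simpl. ring. rewrite IHm. ring. Qed.
Lemma rsum_scal m F k : rsum m (fun i => k * F i) = k * rsum m F.
Proof. induction m; simpl. ring. rewrite IHm. ring. Qed.
Lemma rsum_ge m F : (forall i, (i < m)%nat -> 0 <= F i) -> forall i, (i < m)%nat -> F i <= rsum m F.
Proof.
  induction m; simpl; intros H i Hi. lia.
  assert (0 <= rsum m F).
  { clear IHm i Hi. induction m; simpl. lra. assert (0 <= F m) by (apply H; lia).
    assert (0 <= rsum m F) by (apply IHm; intros; apply H; lia). lra. }
  destruct (Nat.eq_dec i m). subst. lra.
  assert (F i <= rsum m F) by (apply IHm; auto; lia). assert (0 <= F m) by (apply H; lia). lra.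
Qed.
Lemma rsum_nonneg m F : (forall i, (i < m)%nat -> 0 <= F i) -> 0 <= rsum m F.
Proof. induction m; simpl; intros H. lra. assert (0 <= F m) by (apply H; lia).
  assert (0 <= rsum m F) by (apply IHm; intros; apply H; lia). lra. Qed.

Lemma cont1_rsum (F : nat -> R -> R) m : (forall i, cont1 (F i)) -> cont1 (fun y => rsum m (fun i => F i y)).
Proof. intros H. induction m; simpl. apply cont1_const. apply cont1_plus; auto. Qed.

Lemma RInt_rsum (F : nat -> R -> R) m a b : (forall i, cont1 (F i)) ->
  RInt (fun y => rsum m (fun i => F i y)) a b = rsum m (fun i => RInt (F i) a b).
Proof.
  intros H. induction m; simpl. rewrite RInt_zero; auto.
  rewrite RInt_plusR. rewrite IHm. reflexivity. apply cont1_rsum; auto. apply H.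
Qed.

Lemma Xray_trunc g F x T : 0 <= T -> cont1 (fun t => F (vadd x (vscal t g))) ->
  (forall t, T <= t -> F (vadd x (vscal t g)) = 0) ->
  Xray g F x = RInt (fun t => F (vadd x (vscal t g))) 0 T.
Proof.
  intros HT Hc Hz. unfold Xray.
  set (phi := fun t => F (vadd x (vscal t g))).
  apply (is_RInt_gen_unique (Fa := at_point 0) (Fb := Rbar_locally p_infty)).
  intros P HP. simpl.
  apply (Filter_prod _ _ _ (fun a => a = 0) (fun b => T < b)).
  - reflexivity.
  - exists T. auto.
  - intros a b Ha Hb. subst a. exists (RInt phi 0 T). split.
    + simpl.
      assert (E : RInt phi 0 b = RInt phi 0 T).
      { rewrite <- (RInt_ChaslesR phi 0 T b) by auto. rewrite (RInt_zero phi T b). fixeq; ring.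
        intros y Hy. rewrite Rmin_left in Hy by lra. apply Hz. lra. }
      rewrite <- E. apply (RInt_correct (V := R_CompleteNormedModule)). apply exRc; auto.
    + apply locally_singleton. auto.
Qed.

Definition boxs R0 (H : pt -> R) := forall y : pt, R0 <= Rabs (fst y) \/ R0 <= Rabs (snd y) -> H y = 0.
Definition contH (H : pt -> R) := forall p : pt, continuous H p.
Definition AA (H : pt -> R) lam R0 s := RInt (fun x => H (x, s + lam * x)) (- R0) R0.

Lemma AA_cont H lam R0 : contH H -> cont1 (AA H lam R0).
Proof.
  intros Hc. unfold AA. apply (PC (fun s x => H (x, s + lam * x))).
  apply cont2_H; auto. apply cont2_id2. apply cont2_plus. apply cont2_id1.
  apply cont2_mult. apply cont2_const. apply cont2_id2.
Qed.

Lemma AA_supp H lam R0 s : 0 <= R0 -> boxs R0 H -> R0 + Rabs lam * R0 <= Rabs s -> AA H lam R0 s = 0.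
Proof.
  intros HR Hb Hs. unfold AA. apply RInt_zero. intros x Hx.
  rewrite Rmin_left in Hx by lra. rewrite Rmax_right in Hx by lra.
  apply Hb. right. simpl.
  assert (Rabs x <= R0) by (apply Rabs_le; lra).
  assert (Rabs (lam * x) <= Rabs lam * R0). { rewrite Rabs_mult. apply Rmult_le_compat_l; auto. apply Rabs_pos. }
  pose proof (Rabs_triang_inv s (- (lam * x))). rewrite Rabs_Ropp in H2.
  replace (s - - (lam * x)) with (s + lam * x) in H2 by ring. lra.
Qed.

Lemma PK H R0 g1 g2 lam b T X : 0 < R0 -> contH H -> boxs R0 H -> Rabs g1 <= 1 ->
  (- lam * g1 + 1 * g2) <> 0 ->
  (R0 + Rabs b + Rabs lam * R0) / Rabs (- lam * g1 + 1 * g2) <= T -> 0 <= T -> R0 + T <= X ->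
  RInt (fun x => RInt (fun t => H (x + t * g1, b + lam * x + t * g2)) 0 T) (- X) X =
  (RInt (AA H lam R0) b (R0 + Rabs lam * R0)
   - (if Rlt_dec (- lam * g1 + 1 * g2) 0 then RInt (AA H lam R0) (- (R0 + Rabs lam * R0)) (R0 + Rabs lam * R0) else 0))
  / (- lam * g1 + 1 * g2).
Proof.
  intros HR Hc Hb Hg1 Hbeta HT HT0 HX.
  set (beta := - lam * g1 + 1 * g2) in *.
  set (S0 := R0 + Rabs lam * R0).
  set (A := AA H lam R0).
  assert (HAc : cont1 A) by (apply AA_cont; auto).
  assert (HAs : forall s, S0 <= Rabs s -> A s = 0) by (intros; apply AA_supp; auto; lra).
  rewrite (FB (fun x t => H (x + t * g1, b + lam * x + t * g2))).
  2:{ apply cont2_H; auto.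
      - apply cont2_plus. apply cont2_id1. apply cont2_mult. apply cont2_id2. apply cont2_const.
      - apply cont2_plus. apply cont2_plus. apply cont2_const. apply cont2_mult. apply cont2_const. apply cont2_id1.
        apply cont2_mult. apply cont2_id2. apply cont2_const. }
  rewrite (RInt_ext _ (fun t => A (b + t * beta))).
  2:{ intros t Ht. rewrite Rmin_left in Ht by lra. rewrite Rmax_right in Ht by lra.
      set (f := fun y => H (y, (b + t * beta) + lam * y)).
      assert (Hf : cont1 f).
      { unfold f. intros y. apply (cont2_r (fun _ y => H (y, b + t * beta + lam * y)) 0).
        apply cont2_H; auto. apply cont2_id2. apply cont2_plus. apply cont2_const.
        apply cont2_mult. apply cont2_const. apply cont2_id2. }
      assert (E1 := RInt_comp_lin f 1 (t * g1) (- X) X (exRc _ _ _ Hf)).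
      rewrite (RInt_ext _ (fun x => H (x + t * g1, b + lam * x + t * g2))) in E1.
      2:{ intros y _. unfold f, scal; simpl; unfold mult; simpl. rewrite Rmult_1_l.
          replace (1 * y + t * g1) with (y + t * g1) by ring.
          replace (b + t * beta + lam * (y + t * g1)) with (b + lam * y + t * g2) by (unfold beta; ring).
          reflexivity. }
      rewrite E1. unfold A, AA. fold f.
      assert (Rabs (t * g1) <= T).
      { rewrite Rabs_mult, Rabs_pos_eq by lra. assert (0 <= Rabs g1) by apply Rabs_pos. nra. }
      apply Rabs_le_between' in H0 || idtac.
      apply RInt_supp; auto.
      - intros y Hy. unfold f. apply Hb. left. simpl. auto.
      - apply Rabs_le in H0 || idtac. unfold Rabs in H0. destruct Rcase_abs in H0; lra.
      - unfold Rabs in H0. destruct Rcase_abs in H0; lra. }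
  (* change of variable s = b + t beta *)
  assert (E2 := RInt_comp_lin A beta b 0 T (exRc _ _ _ HAc)).
  rewrite (RInt_ext _ (fun t => beta * A (b + t * beta))) in E2.
  2:{ intros y _. unfold scal; simpl; unfold mult; simpl. fixeq. f_equal. f_equal. ring. }
  rewrite RInt_scalR in E2.
  2:{ intros y. apply (continuous_comp (fun t => b + t * beta) A). apply cont1_plus. apply cont1_const.
      apply cont1_mult. apply cont1_id. apply cont1_const. apply HAc. }
  replace (beta * 0 + b) with b in E2 by ring.
  assert (HK : R0 + Rabs b + Rabs lam * R0 <= Rabs beta * T).
  { assert (0 < Rabs beta) by (apply Rabs_pos_lt; auto).
    apply Rmult_le_compat_l with (r := Rabs beta) in HT; try lra.
    unfold Rdiv in HT. rewrite <- Rmult_assoc, (Rmult_comm (Rabs beta)), Rmult_assoc, Rinv_r in HT by lra. lra. }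
  assert (Main : RInt (fun t => A (b + t * beta)) 0 T = RInt A b (beta * T + b) / beta).
  { rewrite <- E2. unfold Rdiv. rewrite Rmult_comm, <- Rmult_assoc, Rinv_l, Rmult_1_l; auto. }
  rewrite Main. f_equal.
  destruct (Rlt_dec beta 0) as [Hneg|Hpos].
  - rewrite (Rabs_left beta Hneg) in HK.
    rewrite <- (RInt_ChaslesR A b S0 (beta * T + b)) by auto.
    rewrite <- (RInt_ChaslesR A S0 (- S0) (beta * T + b)) by auto.
    rewrite (RInt_zero A (- S0) (beta * T + b)).
    2:{ intros x Hx. apply HAs. unfold Rmin, Rmax in Hx. destruct Rle_dec in Hx.
        - unfold Rabs; destruct Rcase_abs; unfold S0 in *; pose proof (Rabs_pos b); pose proof (Rabs_pos lam);
          pose proof (Rle_abs b); pose proof (Rle_abs (-b)); rewrite Rabs_Ropp in *; nra.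
        - unfold Rabs; destruct Rcase_abs; unfold S0 in *; pose proof (Rabs_pos b); pose proof (Rabs_pos lam);
          pose proof (Rle_abs b); pose proof (Rle_abs (-b)); rewrite Rabs_Ropp in *; nra. }
    rewrite <- (opp_RInt_swap A (- S0) S0) by (apply exRc; auto).
    simpl. unfold plus, opp, zero; simpl. ring.
  - assert (Hb0 : beta > 0) by (apply Rnot_lt_le in Hpos; destruct Hpos; auto; exfalso; auto). rewrite (Rabs_right beta (Rgt_ge _ _ Hb0)) in HK.
    rewrite <- (RInt_ChaslesR A b S0 (beta * T + b)) by auto.
    rewrite (RInt_zero A S0 (beta * T + b)).
    2:{ intros x Hx. apply HAs. unfold Rmin, Rmax in Hx. destruct Rle_dec in Hx.
        - unfold Rabs; destruct Rcase_abs; unfold S0 in *; pose proof (Rabs_pos b); pose proof (Rabs_pos lam);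
          pose proof (Rle_abs b); pose proof (Rle_abs (-b)); rewrite Rabs_Ropp in *; nra.
        - unfold Rabs; destruct Rcase_abs; unfold S0 in *; pose proof (Rabs_pos b); pose proof (Rabs_pos lam);
          pose proof (Rle_abs b); pose proof (Rle_abs (-b)); rewrite Rabs_Ropp in *; nra. }
    simpl. unfold plus, opp, zero; simpl. ring.
Qed.

Definition goodw m gam c (w : pt) :=
  (forall k, (k < m)%nat -> dot w (gam k) <> 0) /\
  vsum m (fun i => vscal (c i / dot w (gam i)) (gam i)) <> (0, 0).

Lemma pt_eq (u v : pt) : fst u = fst v -> snd u = snd v -> u = v.
Proof. destruct u, v; simpl; intros; subst; auto. Qed.

Lemma good_psi m gam c psi : not_in_Z1 m gam psi -> gamma_psi m gam c psi <> (0, 0) -> goodw m gam c psi.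
Proof.
  intros [_ H1] H2. split; auto. intros E. apply H2. unfold gamma_psi. rewrite E.
  unfold vscal; simpl. f_equal; ring.
Qed.

Lemma good_scale m gam c w s : s <> 0 -> goodw m gam c w -> goodw m gam c (vscal s w).
Proof.
  intros Hs [H1 H2].
  assert (Hd : forall k, dot (vscal s w) (gam k) = s * dot w (gam k)).
  { intros k. unfold dot, vscal; simpl. ring. }
  split.
  - intros k Hk. rewrite Hd. intros E. apply Rmult_integral in E. destruct E; auto. apply (H1 k); auto.
  - intros E. apply H2. apply pt_eq.
    + assert (E1 := f_equal fst E). rewrite vsum_fst in E1 |- *. simpl in E1 |- *.
      rewrite (rsum_ext m _ (fun i => / s * (c i / dot w (gam i) * fst (gam i)))) in E1.
      2:{ intros i Hi. rewrite Hd. field. split; auto. }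
      rewrite rsum_scal in E1. apply Rmult_integral in E1. destruct E1 as [E1|E1]; auto.
      exfalso. apply Rinv_neq_0_compat in Hs. auto.
    + assert (E1 := f_equal snd E). rewrite vsum_snd in E1 |- *. simpl in E1 |- *.
      rewrite (rsum_ext m _ (fun i => / s * (c i / dot w (gam i) * snd (gam i)))) in E1.
      2:{ intros i Hi. rewrite Hd. field. split; auto. }
      rewrite rsum_scal in E1. apply Rmult_integral in E1. destruct E1 as [E1|E1]; auto.
      exfalso. apply Rinv_neq_0_compat in Hs. auto.
Qed.

Lemma locally_ne (f : R -> R) (x : R) : continuous f x -> f x <> 0 -> locally x (fun t : R => f t <> 0).
Proof.
  intros Hf Hx. assert (Hp : 0 < Rabs (f x)) by (apply Rabs_pos_lt; auto).
  destruct (proj1 (filterlim_locally f (f x)) Hf (mkposreal _ Hp)) as [d Hd].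
  exists d. intros t Ht E. specialize (Hd t Ht). unfold ball in Hd; simpl in Hd.
  unfold AbsRing_ball, abs, minus, plus, opp in Hd; simpl in Hd. rewrite E in Hd.
  rewrite Rplus_0_l, Rabs_Ropp in Hd. lra.
Qed.

Lemma cont_rsum_at (F : nat -> R -> R) m x : (forall i, (i < m)%nat -> continuous (F i) x) ->
  continuous (fun t => rsum m (fun i => F i t)) x.
Proof.
  induction m; intros H; simpl.
  - apply continuous_const.
  - apply (continuous_plus (fun t => rsum m (fun i => F i t)) (F m)). apply IHm; auto.
    apply H; lia.
Qed.

Lemma good_open m gam c w0 v : goodw m gam c w0 ->
  exists d, 0 < d /\ forall t, Rabs t < d -> goodw m gam c (vadd w0 (vscal t v)).
Proof.
  intros [H1 H2].
  set (dd := fun k t => dot (vadd w0 (vscal t v)) (gam k)).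
  assert (Hdc : forall k, cont1 (dd k)).
  { intros k. unfold dd, dot, vadd, vscal; simpl. apply cont1_plus; apply cont1_mult; try apply cont1_const;
    apply cont1_plus; try apply cont1_const; apply cont1_mult; try apply cont1_id; apply cont1_const. }
  assert (Hd0 : forall k, dd k 0 = dot w0 (gam k)).
  { intros k. unfold dd, dot, vadd, vscal; simpl. ring. }
  assert (L2 : forall n, (n <= m)%nat -> locally 0 (fun t => forall k, (k < n)%nat -> dd k t <> 0)).
  { induction n; intros Hn.
    - apply filter_forall. intros; lia.
    - apply filter_imp with (P := fun t => (forall k, (k < n)%nat -> dd k t <> 0) /\ dd n t <> 0).
      + intros t [Ha Hb] k Hk. destruct (Nat.eq_dec k n). subst; auto. apply Ha; lia.
      + apply filter_and. apply IHn; lia. apply locally_ne. apply Hdc. rewrite Hd0. apply H1; lia. }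
  set (F1 := fun i t => c i / dd i t * fst (gam i)).
  set (F2 := fun i t => c i / dd i t * snd (gam i)).
  assert (HF1 : forall i, (i < m)%nat -> continuous (F1 i) 0).
  { intros i Hi. unfold F1. apply (continuous_mult (fun t => c i / dd i t) (fun _ => fst (gam i))).
    apply (continuous_mult (fun _ => c i) (fun t => / dd i t)). apply continuous_const.
    apply continuous_Rinv_comp. apply Hdc. rewrite Hd0. apply H1; auto. apply continuous_const. }
  assert (HF2 : forall i, (i < m)%nat -> continuous (F2 i) 0).
  { intros i Hi. unfold F2. apply (continuous_mult (fun t => c i / dd i t) (fun _ => snd (gam i))).
    apply (continuous_mult (fun _ => c i) (fun t => / dd i t)). apply continuous_const.
    apply continuous_Rinv_comp. apply Hdc. rewrite Hd0. apply H1; auto. apply continuous_const. }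
  assert (Hfs : forall t, fst (vsum m (fun i => vscal (c i / dot (vadd w0 (vscal t v)) (gam i)) (gam i))) = rsum m (fun i => F1 i t)).
  { intros t. rewrite vsum_fst. reflexivity. }
  assert (Hsn : forall t, snd (vsum m (fun i => vscal (c i / dot (vadd w0 (vscal t v)) (gam i)) (gam i))) = rsum m (fun i => F2 i t)).
  { intros t. rewrite vsum_snd. reflexivity. }
  assert (L4 : locally 0 (fun t => rsum m (fun i => F1 i t) <> 0 \/ rsum m (fun i => F2 i t) <> 0)).
  { destruct (Req_dec (rsum m (fun i => F1 i 0)) 0) as [E1|E1].
    - destruct (Req_dec (rsum m (fun i => F2 i 0)) 0) as [E2|E2].
      + exfalso. apply H2. apply pt_eq.
        * rewrite vsum_fst. rewrite <- E1. simpl. apply rsum_ext. intros i _. unfold F1. rewrite Hd0. reflexivity.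
        * rewrite vsum_snd. rewrite <- E2. simpl. apply rsum_ext. intros i _. unfold F2. rewrite Hd0. reflexivity.
      + apply filter_imp with (P := fun t => rsum m (fun i => F2 i t) <> 0). auto.
        apply (locally_ne (fun t => rsum m (fun i => F2 i t))); auto. apply cont_rsum_at; auto.
    - apply filter_imp with (P := fun t => rsum m (fun i => F1 i t) <> 0). auto.
      apply (locally_ne (fun t => rsum m (fun i => F1 i t))); auto. apply cont_rsum_at; auto. }
  destruct (filter_and _ _ (L2 m (le_n m)) L4) as [eps He].
  exists eps. split. apply cond_pos. intros t Ht.
  assert (Hb : ball 0 eps t).
  { unfold ball; simpl; unfold AbsRing_ball, abs, minus, plus, opp; simpl. rewrite Ropp_0, Rplus_0_r. auto. }
  destruct (He t Hb) as [Ha Hb2]. split.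
  - intros k Hk. apply Ha; auto.
  - intros E. destruct Hb2 as [Hb2|Hb2]; apply Hb2.
    + rewrite <- Hfs, E. reflexivity.
    + rewrite <- Hsn, E. reflexivity.
Qed.

Lemma good_lambda m gam c psi : goodw m gam c psi ->
  exists l0 d, 0 < d /\ forall l, Rabs (l - l0) < d -> goodw m gam c (- l, 1).
Proof.
  intros Hg.
  assert (Hp : exists psi', goodw m gam c psi' /\ snd psi' <> 0).
  { destruct (Req_dec (snd psi) 0) as [E|E].
    - destruct (good_open m gam c psi (0, 1) Hg) as [d [Hd H]].
      exists (vadd psi (vscal (d / 2) (0, 1))). split.
      + apply H. rewrite Rabs_pos_eq; lra.
      + simpl. rewrite E. lra.
    - exists psi; auto. }
  destruct Hp as [[p1 p2] [Hg' Hp2]]. simpl in Hp2.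
  destruct (good_open m gam c (p1, p2) (1, 0) Hg') as [d [Hd H]].
  assert (Ha : 0 < Rabs p2) by (apply Rabs_pos_lt; auto).
  exists (- p1 / p2), (d / Rabs p2). split. apply Rdiv_lt_0_compat; auto.
  intros l Hl.
  set (t := - p2 * l - p1).
  assert (Ht : Rabs t < d).
  { replace t with (- p2 * (l - - p1 / p2)) by (unfold t; field; auto).
    rewrite Rabs_mult, Rabs_Ropp.
    apply Rmult_lt_compat_l with (r := Rabs p2) in Hl; auto.
    unfold Rdiv in Hl. rewrite <- Rmult_assoc, (Rmult_comm (Rabs p2) d), Rmult_assoc, Rinv_r, Rmult_1_r in Hl by lra.
    lra. }
  specialize (H t Ht).
  apply (good_scale m gam c _ (/ p2)) in H. 2: apply Rinv_neq_0_compat; auto.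
  replace (- l, 1) with (vscal (/ p2) (vadd (p1, p2) (vscal t (1, 0)))); auto.
  apply pt_eq; unfold vscal, vadd; simpl; unfold t; field; auto.
Qed.

Lemma c2c_cont r F : C2c_disc r F -> contH F.
Proof. intros [[[_ [_ [H _]]] _] _]. exact H. Qed.

Lemma vnorm_ge1 y : Rabs (fst y) <= vnorm y.
Proof. unfold vnorm, dot. rewrite <- sqrt_Rsqr_abs. apply sqrt_le_1_alt. unfold Rsqr. nra. Qed.
Lemma vnorm_ge2 y : Rabs (snd y) <= vnorm y.
Proof. unfold vnorm, dot. rewrite <- sqrt_Rsqr_abs. apply sqrt_le_1_alt. unfold Rsqr. nra. Qed.

Lemma c2c_box r F : C2c_disc r F -> exists R0, 0 < R0 /\ boxs R0 F.
Proof.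
  intros [_ [r' [_ H]]]. exists (Rmax 1 r'). split. apply Rlt_le_trans with 1. lra. apply Rmax_l.
  intros y Hy. apply H. pose proof (Rmax_r 1 r'). pose proof (vnorm_ge1 y). pose proof (vnorm_ge2 y).
  destruct Hy; lra.
Qed.

Lemma boxs_mono R0 R1 F : R0 <= R1 -> boxs R0 F -> boxs R1 F.
Proof. intros H HF y Hy. apply HF. destruct Hy; [left|right]; lra. Qed.

Lemma contH_lin a b (F1 F2 : pt -> R) : contH F1 -> contH F2 -> contH (fun y => a * F1 y + b * F2 y).
Proof.
  intros H1 H2 p. apply (continuous_plus (fun y => a * F1 y) (fun y => b * F2 y)).
  apply (continuous_mult (fun _ => a) F1). apply continuous_const. apply H1.
  apply (continuous_mult (fun _ => b) F2). apply continuous_const. apply H2.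
Qed.

Lemma cont1_line F a b p q : contH F -> cont1 (fun t => F (a + t * p, b + t * q)).
Proof.
  intros HF. apply (cont2_r (fun _ t => F (a + t * p, b + t * q)) 0).
  apply cont2_H; auto; apply cont2_plus; try apply cont2_const; apply cont2_mult; try apply cont2_id2; apply cont2_const.
Qed.

Lemma geo F R0 g1 g2 lam b x T t : 0 < R0 -> boxs R0 F -> (- lam * g1 + 1 * g2) <> 0 ->
  (R0 + Rabs b + Rabs lam * R0) / Rabs (- lam * g1 + 1 * g2) <= T -> T <= t ->
  F (x + t * g1, b + lam * x + t * g2) = 0.
Proof.
  intros HR Hb Hbeta HT Ht. set (beta := - lam * g1 + 1 * g2) in *.
  assert (Hp : 0 < Rabs beta) by (apply Rabs_pos_lt; auto).
  assert (HK : R0 + Rabs b + Rabs lam * R0 <= Rabs beta * t).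
  { apply Rmult_le_compat_l with (r := Rabs beta) in HT; try lra.
    unfold Rdiv in HT. rewrite <- Rmult_assoc, (Rmult_comm (Rabs beta)), Rmult_assoc, Rinv_r in HT by lra.
    assert (Rabs beta * T <= Rabs beta * t) by (apply Rmult_le_compat_l; lra). lra. }
  apply Hb. simpl. destruct (Rle_lt_dec R0 (Rabs (x + t * g1))) as [H|H]; [left; auto|right].
  replace (b + lam * x + t * g2) with ((t * beta) - (- b - lam * (x + t * g1))) by (unfold beta; ring).
  eapply Rle_trans; [|apply Rabs_triang_inv].
  assert (Rabs (- b - lam * (x + t * g1)) <= Rabs b + Rabs lam * R0).
  { eapply Rle_trans. unfold Rminus. apply Rabs_triang. rewrite !Rabs_Ropp, Rabs_mult.
    assert (Rabs lam * Rabs (x + t * g1) <= Rabs lam * R0) by (apply Rmult_le_compat_l; [apply Rabs_pos|lra]). lra. }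
  assert (0 <= t). { assert (0 <= (R0 + Rabs b + Rabs lam * R0) / Rabs beta).
    apply Rdiv_le_0_compat; auto. pose proof (Rabs_pos b); pose proof (Rabs_pos lam); nra. lra. }
  rewrite Rabs_mult, (Rabs_pos_eq t) by lra. lra.
Qed.

Section Main.
Variables (m : nat) (gam : nat -> pt) (c : nat -> R) (R0 : R) (f g : vfield).
Hypotheses (HR : 0 < R0)
  (Hunit : forall i, (i < m)%nat -> is_unit (gam i))
  (Hf1 : contH (fst f)) (Hf2 : contH (snd f)) (Hg1 : contH (fst g)) (Hg2 : contH (snd g))
  (Bf1 : boxs R0 (fst f)) (Bf2 : boxs R0 (snd f)) (Bg1 : boxs R0 (fst g)) (Bg2 : boxs R0 (snd g)).

Definition h1 y := fst f y - fst g y.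
Definition h2 y := snd f y - snd g y.
Definition Hv (v : pt) y := fst v * h1 y + snd v * h2 y.

Lemma h1_cont : contH h1.
Proof. unfold h1. intros p. apply (continuous_minus (fst f) (fst g)); auto. Qed.
Lemma h2_cont : contH h2.
Proof. unfold h2. intros p. apply (continuous_minus (snd f) (snd g)); auto. Qed.
Lemma Hv_cont v : contH (Hv v).
Proof. apply contH_lin; [apply h1_cont|apply h2_cont]. Qed.
Lemma h1_box : boxs R0 h1.
Proof. intros y Hy. unfold h1. rewrite Bf1, Bg1; auto. ring. Qed.
Lemma h2_box : boxs R0 h2.
Proof. intros y Hy. unfold h2. rewrite Bf2, Bg2; auto. ring. Qed.
Lemma Hv_box v : boxs R0 (Hv v).
Proof. intros y Hy. unfold Hv. rewrite h1_box, h2_box; auto. ring. Qed.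
Lemma fdot_cont (F : vfield) v : contH (fst F) -> contH (snd F) -> contH (fdot F v).
Proof.
  intros H1 H2 p. unfold fdot. apply (continuous_plus (fun y => fst F y * fst v) (fun y => snd F y * snd v)).
  apply (continuous_mult (fst F) (fun _ => fst v)); auto. apply continuous_const.
  apply (continuous_mult (snd F) (fun _ => snd v)); auto. apply continuous_const.
Qed.
Lemma fdot_box (F : vfield) v : boxs R0 (fst F) -> boxs R0 (snd F) -> boxs R0 (fdot F v).
Proof. intros H1 H2 y Hy. unfold fdot. rewrite H1, H2; auto. ring. Qed.

Lemma unit_fst i : (i < m)%nat -> Rabs (fst (gam i)) <= 1.
Proof.
  intros Hi. specialize (Hunit i Hi). unfold is_unit, dot in Hunit. apply Rabs_le. nra.
Qed.

Let S0 lam := R0 + Rabs lam * R0.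
Let EE V lam i := if Rlt_dec (- lam * fst (gam i) + 1 * snd (gam i)) 0
   then RInt (AA (Hv (V i)) lam R0) (- S0 lam) (S0 lam) else 0.

Lemma GEN (V : nat -> pt) lam : goodw m gam c (- lam, 1) ->
  (forall x b, rsum m (fun i => c i * Xray (gam i) (fdot f (V i)) (x, b + lam * x))
             = rsum m (fun i => c i * Xray (gam i) (fdot g (V i)) (x, b + lam * x))) ->
  forall b, rsum m (fun i => c i * ((RInt (AA (Hv (V i)) lam R0) b (S0 lam) - EE V lam i)
                                    / (- lam * fst (gam i) + 1 * snd (gam i)))) = 0.
Proof.
  intros [Hb1 _] Heq b.
  assert (Hbet : forall i, (i < m)%nat -> - lam * fst (gam i) + 1 * snd (gam i) <> 0).
  { intros i Hi. exact (Hb1 i Hi). }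
  set (K := R0 + Rabs b + Rabs lam * R0).
  assert (HK : 0 <= K) by (unfold K; pose proof (Rabs_pos b); pose proof (Rabs_pos lam); nra).
  set (T := rsum m (fun i => K / Rabs (- lam * fst (gam i) + 1 * snd (gam i)))).
  assert (Hnn : forall i, (i < m)%nat -> 0 <= K / Rabs (- lam * fst (gam i) + 1 * snd (gam i))).
  { intros i Hi. apply Rdiv_le_0_compat; auto. apply Rabs_pos_lt; auto. }
  assert (HTi : forall i, (i < m)%nat -> K / Rabs (- lam * fst (gam i) + 1 * snd (gam i)) <= T).
  { intros i Hi. apply (rsum_ge m (fun i => K / Rabs (- lam * fst (gam i) + 1 * snd (gam i)))); auto. }
  assert (HT0 : 0 <= T) by (apply rsum_nonneg; auto).
  set (X := R0 + T).
  set (I := fun i x => RInt (fun t => Hv (V i) (x + t * fst (gam i), b + lam * x + t * snd (gam i))) 0 T).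
  assert (Htr : forall (F : vfield) i x, (i < m)%nat -> contH (fst F) -> contH (snd F) ->
     boxs R0 (fst F) -> boxs R0 (snd F) ->
     Xray (gam i) (fdot F (V i)) (x, b + lam * x) =
     RInt (fun t => fdot F (V i) (x + t * fst (gam i), b + lam * x + t * snd (gam i))) 0 T).
  { intros F i x Hi Hc1 Hc2 Hb1' Hb2'. apply Xray_trunc; auto.
    - apply cont1_line. apply fdot_cont; auto.
    - intros t Ht. unfold vadd, vscal; simpl. apply (geo _ R0 _ _ lam b x T t); auto. apply fdot_box; auto. }
  assert (Hx : forall x, rsum m (fun i => c i * I i x) = 0).
  { intros x. specialize (Heq x b).
    rewrite (rsum_ext m _ (fun i => c i * RInt (fun t => fdot f (V i) (x + t * fst (gam i), b + lam * x + t * snd (gam i))) 0 T)) in Heq.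
    2:{ intros i Hi. rewrite Htr; auto. }
    rewrite (rsum_ext m (fun i => c i * Xray (gam i) (fdot g (V i)) (x, b + lam * x))
       (fun i => c i * RInt (fun t => fdot g (V i) (x + t * fst (gam i), b + lam * x + t * snd (gam i))) 0 T)) in Heq.
    2:{ intros i Hi. rewrite Htr; auto. }
    apply Rminus_diag_eq in Heq. rewrite <- rsum_minus in Heq. rewrite <- Heq.
    apply rsum_ext. intros i Hi. unfold I. rewrite <- Rmult_minus_distr_l. f_equal.
    rewrite <- RInt_minusR. apply RInt_ext. intros t _. unfold Hv, h1, h2, fdot. fixeq; ring.
    apply cont1_line, fdot_cont; auto. apply cont1_line, fdot_cont; auto. }
  assert (HIc : forall i, cont1 (I i)).
  { intros i. unfold I. apply (PC (fun x t => Hv (V i) (x + t * fst (gam i), b + lam * x + t * snd (gam i)))).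
    apply cont2_H. apply Hv_cont.
    - apply cont2_plus. apply cont2_id1. apply cont2_mult. apply cont2_id2. apply cont2_const.
    - apply cont2_plus. apply cont2_plus. apply cont2_const. apply cont2_mult. apply cont2_const. apply cont2_id1.
      apply cont2_mult. apply cont2_id2. apply cont2_const. }
  assert (Z : RInt (fun x => rsum m (fun i => c i * I i x)) (- X) X = 0).
  { apply RInt_zero. intros x _. apply Hx. }
  rewrite RInt_rsum in Z.
  2:{ intros i. apply cont1_mult. apply cont1_const. apply HIc. }
  rewrite <- Z. apply rsum_ext. intros i Hi. rewrite RInt_scalR by apply HIc. f_equal.
  unfold I. rewrite (PK _ R0); auto.
  - apply Hv_cont.
  - apply Hv_box.
  - apply unit_fst; auto.
  - unfold X; lra.
Qed.

Lemma cont_lineAA (H : pt -> R) s lam : contH H -> cont1 (fun x => H (x, s + lam * x)).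
Proof.
  intros Hc x. apply (cont2_r (fun _ x => H (x, s + lam * x)) 0). apply cont2_H; auto.
  apply cont2_id2. apply cont2_plus. apply cont2_const. apply cont2_mult. apply cont2_const. apply cont2_id2.
Qed.

Lemma LinAA v lam s : AA (Hv v) lam R0 s = fst v * AA h1 lam R0 s + snd v * AA h2 lam R0 s.
Proof.
  assert (C1 := cont_lineAA h1 s lam h1_cont). assert (C2 := cont_lineAA h2 s lam h2_cont).
  unfold AA, Hv. rewrite RInt_plusR, !RInt_scalR; auto; apply cont1_mult; auto; apply cont1_const.
Qed.

Lemma LinJ v lam a b : RInt (AA (Hv v) lam R0) a b = fst v * RInt (AA h1 lam R0) a b + snd v * RInt (AA h2 lam R0) a b.
Proof.
  assert (C1 := AA_cont h1 lam R0 h1_cont). assert (C2 := AA_cont h2 lam R0 h2_cont).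
  rewrite (RInt_ext _ (fun s => fst v * AA h1 lam R0 s + snd v * AA h2 lam R0 s)) by (intros; apply LinAA).
  rewrite RInt_plusR, !RInt_scalR; auto; apply cont1_mult; auto; apply cont1_const.
Qed.

Lemma comb (V : nat -> pt) lam : goodw m gam c (- lam, 1) ->
  (forall x b, rsum m (fun i => c i * Xray (gam i) (fdot f (V i)) (x, b + lam * x))
             = rsum m (fun i => c i * Xray (gam i) (fdot g (V i)) (x, b + lam * x))) ->
  forall b, RInt (AA h1 lam R0) b (S0 lam) * rsum m (fun i => c i / (- lam * fst (gam i) + 1 * snd (gam i)) * fst (V i))
          + RInt (AA h2 lam R0) b (S0 lam) * rsum m (fun i => c i / (- lam * fst (gam i) + 1 * snd (gam i)) * snd (V i)) = 0.
Proof.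
  intros Hg Heq b.
  assert (E1 := GEN V lam Hg Heq b). assert (E2 := GEN V lam Hg Heq (S0 lam)).
  rewrite <- (Rminus_0_r 0). rewrite <- E1 at 1. rewrite <- E2.
  rewrite <- rsum_minus, <- !rsum_scal, <- rsum_plus. apply rsum_ext. intros i Hi.
  rewrite RInt_point. rewrite LinJ. unfold zero; simpl. field.
  destruct Hg as [Hb _]. intros E. apply (Hb i Hi). unfold dot; simpl. lra.
Qed.

Lemma A_zero lam : goodw m gam c (- lam, 1) ->
  (forall x b, star m gam c f (x, b + lam * x) = star m gam c g (x, b + lam * x)) ->
  forall s, AA h1 lam R0 s = 0 /\ AA h2 lam R0 s = 0.
Proof.
  intros Hg Hst.
  assert (Heq1 : forall x b, rsum m (fun i => c i * Xray (gam i) (fdot f (gam i)) (x, b + lam * x))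
             = rsum m (fun i => c i * Xray (gam i) (fdot g (gam i)) (x, b + lam * x))).
  { intros x b. assert (H := f_equal fst (Hst x b)). unfold star in H. rewrite !vsum_fst in H. exact H. }
  assert (Heq2 : forall x b, rsum m (fun i => c i * Xray (gam i) (fdot f (perp (gam i))) (x, b + lam * x))
             = rsum m (fun i => c i * Xray (gam i) (fdot g (perp (gam i))) (x, b + lam * x))).
  { intros x b. assert (H := f_equal snd (Hst x b)). unfold star in H. rewrite !vsum_snd in H. exact H. }
  set (p := rsum m (fun i => c i / (- lam * fst (gam i) + 1 * snd (gam i)) * fst (gam i))).
  set (q := rsum m (fun i => c i / (- lam * fst (gam i) + 1 * snd (gam i)) * snd (gam i))).
  assert (Hpq : p <> 0 \/ q <> 0).
  { destruct Hg as [_ Hs]. destruct (Req_dec p 0) as [Ep|Ep]; auto. destruct (Req_dec q 0) as [Eq|Eq]; auto.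
    exfalso. apply Hs. apply pt_eq.
    - rewrite vsum_fst. simpl. rewrite <- Ep. reflexivity.
    - rewrite vsum_snd. simpl. rewrite <- Eq. reflexivity. }
  assert (Hpq2 : 0 < p * p + q * q).
  { destruct Hpq as [H|H]. assert (0 < p * p) by (apply Rsqr_pos_lt; auto). nra.
    assert (0 < q * q) by (apply Rsqr_pos_lt; auto). nra. }
  assert (HJ : forall b, RInt (AA h1 lam R0) b (S0 lam) = 0 /\ RInt (AA h2 lam R0) b (S0 lam) = 0).
  { intros b. assert (E1 := comb gam lam Hg Heq1 b). assert (E2 := comb (fun i => perp (gam i)) lam Hg Heq2 b).
    fold p q in E1. simpl in E2.
    rewrite (rsum_ext m _ (fun i => -1 * (c i / (- lam * fst (gam i) + 1 * snd (gam i)) * snd (gam i)))) in E2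
      by (intros; ring).
    rewrite rsum_scal in E2. fold p q in E2.
    set (J1 := RInt (AA h1 lam R0) b (S0 lam)) in *. set (J2 := RInt (AA h2 lam R0) b (S0 lam)) in *.
    assert (J1 * (p * p + q * q) = 0).
    { replace (J1 * (p * p + q * q)) with (p * (J1 * p + J2 * q) - q * (J1 * (-1 * q) + J2 * p)) by ring.
      rewrite E1, E2. ring. }
    assert (J2 * (p * p + q * q) = 0).
    { replace (J2 * (p * p + q * q)) with (q * (J1 * p + J2 * q) + p * (J1 * (-1 * q) + J2 * p)) by ring.
      rewrite E1, E2. ring. }
    split.
    - apply Rmult_integral in H. destruct H; auto. lra.
    - apply Rmult_integral in H0. destruct H0; auto. lra. }
  assert (Hd : forall (A : R -> R), cont1 A -> (forall b, RInt A b (S0 lam) = 0) -> forall s, A s = 0).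
  { intros A HA HJA s. assert (D := Derive_RInt' A s (S0 lam)).
    rewrite (Derive_ext _ (fun _ => 0)) in D by auto. rewrite Derive_const in D.
    assert (- A s = 0). { symmetry. apply D. apply filter_forall. intros; apply exRc; auto. apply HA. }
    lra. }
  intros s. split.
  - apply Hd. apply AA_cont, h1_cont. intros b; apply HJ.
  - apply Hd. apply AA_cont, h2_cont. intros b; apply HJ.
Qed.

Lemma h_zero_k (h : pt -> R) : contH h -> boxs R0 h -> forall l0 d, 0 < d ->
  (forall l, Rabs (l - l0) < d -> forall s, AA h l R0 s = 0) -> forall y, h y = 0.
Proof.
  intros Hc Hb l0 d Hd HA [x y].
  set (R1 := R0 + Rabs l0 * R0).
  assert (HR1 : R0 <= R1) by (unfold R1; pose proof (Rabs_pos l0); nra).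
  assert (HG := Rad_main (fun x y => h (x, y + l0 * x)) R1 d ltac:(lra) Hd).
  replace (x, y) with (x, (y - l0 * x) + l0 * x) by (f_equal; ring).
  apply HG.
  - apply cont2_H; auto. apply cont2_id1. apply cont2_plus. apply cont2_id2. apply cont2_mult. apply cont2_const. apply cont2_id1.
  - intros u v Hu. apply Hb. left. simpl. lra.
  - intros u v Hv. destruct (Rle_lt_dec R0 (Rabs u)) as [H|H]. apply Hb. left; simpl; auto.
    apply Hb. right. simpl.
    assert (Rabs (l0 * u) <= Rabs l0 * R0) by (rewrite Rabs_mult; apply Rmult_le_compat_l; [apply Rabs_pos|lra]).
    pose proof (Rabs_triang_inv v (- (l0 * u))). rewrite Rabs_Ropp in H1.
    replace (v - - (l0 * u)) with (v + l0 * u) in H1 by ring. unfold R1 in Hv. lra.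
  - intros e He s. rewrite (RInt_supp _ R0).
    + rewrite <- (HA (l0 + e)) with (s := s). unfold AA. apply RInt_ext. intros u _. f_equal. f_equal. ring.
      replace (l0 + e - l0) with e by ring. rewrite Rabs_pos_eq; lra.
    + apply (cont1_comp2 (fun a b => h (a, b))). intros a b. apply (proj2 (continuity_2d_pt_filterlim _ a b)).
      apply filterlim_ext with (f := h). intros [u v]; reflexivity. apply Hc.
      apply cont1_id. apply cont1_plus. apply cont1_plus. apply cont1_const. apply cont1_mult. apply cont1_const. apply cont1_id.
      apply cont1_mult. apply cont1_const. apply cont1_id.
    + intros u Hu. apply Hb. left. simpl. auto.
    + lra.
    + lra.
Qed.
End Main.

Theorem corollary2 (r : R) (m : nat) (gam : nat -> pt) (c : nat -> R) :
  0 < r ->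
  (forall i, (i < m)%nat -> is_unit (gam i)) ->
  (forall i j, (i < m)%nat -> (j < m)%nat -> i <> j -> gam i <> gam j) ->
  (forall i, (i < m)%nat -> c i <> 0) ->
  (exists psi, not_in_Z1 m gam psi /\ gamma_psi m gam c psi <> (0, 0)) ->
  forall f g : vfield,
    C2c_disc r (fst f) -> C2c_disc r (snd f) ->
    C2c_disc r (fst g) -> C2c_disc r (snd g) ->
    (forall x, star m gam c f x = star m gam c g x) ->
    f = g.
Proof.
  intros Hr Hunit _ _ [psi [Hpsi Hgp]] f g Cf1 Cf2 Cg1 Cg2 Hst.
  destruct (c2c_box _ _ Cf1) as [Ra [Ha Ba]].
  destruct (c2c_box _ _ Cf2) as [Rb [Hb Bb]].
  destruct (c2c_box _ _ Cg1) as [Rc [Hc Bc]].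
  destruct (c2c_box _ _ Cg2) as [Rd [Hd Bd]].
  set (R0 := Rmax (Rmax Ra Rb) (Rmax Rc Rd)).
  assert (H1 := Rmax_l Ra Rb). assert (H2 := Rmax_r Ra Rb).
  assert (H3 := Rmax_l Rc Rd). assert (H4 := Rmax_r Rc Rd).
  assert (H5 := Rmax_l (Rmax Ra Rb) (Rmax Rc Rd)). assert (H6 := Rmax_r (Rmax Ra Rb) (Rmax Rc Rd)).
  fold R0 in H5, H6.
  assert (HR : 0 < R0) by lra.
  assert (Bf1 : boxs R0 (fst f)) by (apply (boxs_mono Ra); auto; lra).
  assert (Bf2 : boxs R0 (snd f)) by (apply (boxs_mono Rb); auto; lra).
  assert (Bg1 : boxs R0 (fst g)) by (apply (boxs_mono Rc); auto; lra).
  assert (Bg2 : boxs R0 (snd g)) by (apply (boxs_mono Rd); auto; lra).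
  assert (Kf1 := c2c_cont _ _ Cf1). assert (Kf2 := c2c_cont _ _ Cf2).
  assert (Kg1 := c2c_cont _ _ Cg1). assert (Kg2 := c2c_cont _ _ Cg2).
  destruct (good_lambda m gam c psi (good_psi m gam c psi Hpsi Hgp)) as [l0 [d [Hd0 Hgood]]].
  assert (HA : forall l, Rabs (l - l0) < d -> forall s,
     AA (h1 f g) l R0 s = 0 /\ AA (h2 f g) l R0 s = 0).
  { intros l Hl s. apply (A_zero m gam c R0 f g HR Hunit Kf1 Kf2 Kg1 Kg2 Bf1 Bf2 Bg1 Bg2 l (Hgood l Hl)).
    intros x b. apply Hst. }
  assert (Z1 : forall y, h1 f g y = 0).
  { apply (h_zero_k R0 HR (h1 f g) (h1_cont f g Kf1 Kg1) (h1_box R0 f g Bf1 Bg1) l0 d Hd0).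
    intros l Hl s. exact (proj1 (HA l Hl s)). }
  assert (Z2 : forall y, h2 f g y = 0).
  { apply (h_zero_k R0 HR (h2 f g) (h2_cont f g Kf2 Kg2) (h2_box R0 f g Bf2 Bg2) l0 d Hd0).
    intros l Hl s. exact (proj2 (HA l Hl s)). }
  destruct f as [f1 f2], g as [g1 g2]. f_equal; apply functional_extensionality; intros y.
  - specialize (Z1 y). unfold h1 in Z1. simpl in Z1. lra.
  - specialize (Z2 y). unfold h2 in Z2. simpl in Z2. lra.
Qed.
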